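(* Let $V$ be a set with $\#V=\aleph_0$, let $k:V\times V\to\mathbb{C}$ be a positive definite function, and let $\mathscr{H}=\mathscr{H}(k)$ be the corresponding reproducing kernel Hilbert space. Assume $\delta_x\in\mathscr{H}$ for all $x\in V$. Then there are closable operators $T:\mathscr{H}\to\ell^2(V)$ with domain $\mathrm{span}\{k_x:x\in V\}$ and $S:\ell^2(V)\to\mathscr{H}$ with domain $\mathrm{span}\{\delta_x:x\in V\}$ such that $T\subseteq S^*$, $S\subseteq T^*$, and $$Tk_x=\delta_x,\qquad S\delta_x=\delta_x\qquad\text{for all }x\in V.$$
   Context: $\delta_x(y)=1$ if $y=x$ and $0$ otherwise. A function $k:V\times V\to\mathbb{C}$ is positive definite if $\sum_{x\in F}\sum_{y\in F}k(x,y)\overline{c_x}c_y\ge 0$ for every finite $F\subset V$ and all $\{c_x\}\subset\mathbb{C}$. For $x\in V$ let $k_x:=k(\cdot,x)$. The RKHS $\mathscr{H}(k)$ is the Hilbert completion of $\mathrm{span}\{k_x\}$ with respect to $\langle\sum_x c_xk_x,\sum_y d_yk_y\rangle_{\mathscr{H}}=\sum\sum\overline{c_x}d_yk(x,y)$ (modulo null vectors); it is a Hilbert space of functions on $V$ with $\langle k_x,\varphi\rangle_{\mathscr{H}}=\varphi(x)$ for all $x\in V$, $\varphi\in\mathscr{H}$. *)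

(* Defs.v *)
From HB Require Import structures.
From mathcomp Require Import all_boot all_order all_algebra.
From mathcomp Require Import complex.
From mathcomp Require Import boolp classical_sets cardinality reals.
Set Implicit Arguments. Unset Strict Implicit. Unset Printing Implicit Defensive.
Import Order.TTheory GRing.Theory Num.Theory.
Local Open Scope ring_scope.
Local Open Scope classical_set_scope.

Section RKHS.
Variables (R : realType) (V : choiceType).
Local Notation C := R[i].

Definition cconv (u : nat -> C) (z : C) : Prop :=
  forall e : C, 0 < e -> exists N : nat, forall n : nat, (N <= n)%N -> `|u n - z| < e.

Definition pos_def (k : V -> V -> C) : Prop :=
  forall (F : seq V) (c : V -> C), uniq F ->
    0 <= \sum_(x <- F) \sum_(y <- F) k x y * (c x)^* * c y.

Definition delta (x : V) : V -> C := fun y => (y == x)%:R.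

(* finite linear combinations, encoded as lists of (point, coefficient) *)
Definition kfun (k : V -> V -> C) (c : seq (V * C)) : V -> C :=
  fun y => \sum_(p <- c) p.2 * k y p.1.
Definition dfun (c : seq (V * C)) : V -> C :=
  fun y => \sum_(p <- c) p.2 * delta p.1 y.
Definition kform (k : V -> V -> C) (c d : seq (V * C)) : C :=
  \sum_(p <- c) \sum_(q <- d) (p.2)^* * q.2 * k p.1 q.1.
Definition cdiff (c d : seq (V * C)) : seq (V * C) :=
  c ++ [seq (q.1, - q.2) | q <- d].

(* A sequence of finite combinations that is Cauchy for the pre-inner product
   and converges pointwise to f : the completion realised as functions on V. *)
Definition kapprox (k : V -> V -> C) (c : nat -> seq (V * C)) (f : V -> C) : Prop :=
  (forall e : C, 0 < e -> exists N : nat, forall m n : nat, (N <= m)%N -> (N <= n)%N ->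
      `|kform k (cdiff (c m) (c n)) (cdiff (c m) (c n))| < e)
  /\ (forall y : V, cconv (fun n => kfun k (c n) y) (f y)).

Definition inH (k : V -> V -> C) (f : V -> C) : Prop := exists c, kapprox k c f.
Definition Hip (k : V -> V -> C) (f g : V -> C) : C :=
  xget 0 [set z | exists c d, [/\ kapprox k c f, kapprox k d g &
                                 cconv (fun n => kform k (c n) (d n)) z]].

(* l^2(V) and its inner product (unconditional sums over finite subsets) *)
Definition inl2 (f : V -> C) : Prop :=
  exists M : C, forall F : seq V, uniq F -> \sum_(x <- F) `|f x| ^+ 2 <= M.
Definition l2ip (f g : V -> C) : C :=
  xget 0 [set z | forall e : C, 0 < e -> exists F0 : seq V, forall F : seq V,
            uniq F -> {subset F0 <= F} -> `|\sum_(x <- F) (f x)^* * g x - z| < e].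

Definition span_k (k : V -> V -> C) : set (V -> C) := [set f | exists c, f = kfun k c].
Definition span_delta : set (V -> C) := [set f | exists c, f = dfun c].

(* generic notions for operators between inner-product spaces of functions,
   a space being given by its carrier mem and inner product ip *)
Definition fsub (f g : V -> C) : V -> C := fun y => f y - g y.

Definition nconv (ip : (V -> C) -> (V -> C) -> C) (u : nat -> V -> C) (f : V -> C) :=
  cconv (fun n => ip (fsub (u n) f) (fsub (u n) f)) 0.

Definition linear_on (D : set (V -> C)) (A : (V -> C) -> (V -> C)) : Prop :=
  forall (a : C) (f g : V -> C), D f -> D g ->
    D (fun y => a * f y + g y) /\ A (fun y => a * f y + g y) = (fun y => a * A f y + A g y).

Definition graph_closure (memX memY : set (V -> C)) (ipX ipY : (V -> C) -> (V -> C) -> C)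
    (D : set (V -> C)) (A : (V -> C) -> (V -> C)) (u w : V -> C) : Prop :=
  [/\ memX u, memY w & exists un : nat -> V -> C,
      [/\ forall n, D (un n), nconv ipX un u & nconv ipY (fun n => A (un n)) w]].

(* closable: the closure of the graph is again the graph of an operator *)
Definition closable memX memY ipX ipY D A : Prop :=
  forall u w1 w2, graph_closure memX memY ipX ipY D A u w1 ->
                  graph_closure memX memY ipX ipY D A u w2 -> w1 = w2.

Definition adj_graph (memX memY : set (V -> C)) (ipX ipY : (V -> C) -> (V -> C) -> C)
    (D : set (V -> C)) (A : (V -> C) -> (V -> C)) (y x : V -> C) : Prop :=
  [/\ memY y, memX x & forall v, D v -> ipY (A v) y = ipX v x].

(* B (domain DB) is contained in A^*, i.e. graph B is a subset of graph A^* *)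
Definition sub_adj memX memY ipX ipY D A (DB : set (V -> C)) (B : (V -> C) -> (V -> C)) :=
  forall y, DB y -> adj_graph memX memY ipX ipY D A y (B y).

End RKHS.

(* Main.v *)
Require Import Defs.
From HB Require Import structures.
From mathcomp Require Import all_boot all_order all_algebra.
From mathcomp Require Import complex.
From mathcomp Require Import boolp classical_sets cardinality reals.
From mathcomp Require Import ring lra.
Import Order.TTheory GRing.Theory Num.Theory.
Local Open Scope ring_scope.
Local Open Scope classical_set_scope.
Set Implicit Arguments. Unset Strict Implicit. Unset Printing Implicit Defensive.

Section Dev.
Variables (R : realType) (V : choiceType) (k : V -> V -> R[i]).
Local Notation C := R[i].
Local Notation L := (seq (V * C)).
Local Notation "x %:C" := ((x%:C)%C : C) (at level 1, format "x %:C").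

Definition scl (a : C) (c : L) : L := [seq (p.1, a * p.2) | p <- c].
Definition negl (c : L) : L := [seq (q.1, - q.2) | q <- c].

Local Notation B := (kform k).
Local Notation dfun := (@dfun R V).
Local Notation delta := (@delta R V).
Local Notation inl2 := (@inl2 R V).
Local Notation l2ip := (@l2ip R V).
Local Notation fsub := (@fsub R V).
Local Notation span_delta := (@span_delta R V).

Lemma kform_catl c1 c2 d : B (c1 ++ c2) d = B c1 d + B c2 d.
Proof. by rewrite /kform big_cat. Qed.
Lemma kform_catr c d1 d2 : B c (d1 ++ d2) = B c d1 + B c d2.
Proof. by rewrite /kform -big_split; apply: eq_bigr => p _; rewrite big_cat. Qed.
Lemma kform_scll a c d : B (scl a c) d = a^* * B c d.
Proof.
rewrite /kform big_map mulr_sumr; apply: eq_bigr => p _; rewrite mulr_sumr.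
by apply: eq_bigr => q _ /=; rewrite rmorphM /= -!mulrA.
Qed.
Lemma kform_sclr a c d : B c (scl a d) = a * B c d.
Proof.
rewrite /kform mulr_sumr; apply: eq_bigr => p _; rewrite big_map mulr_sumr.
by apply: eq_bigr => q _ /=; rewrite mulrCA !mulrA.
Qed.
Lemma kform_negll c d : B (negl c) d = - B c d.
Proof.
rewrite /kform big_map -sumrN; apply: eq_bigr => p _; rewrite -sumrN.
by apply: eq_bigr => q _ /=; rewrite rmorphN /= !mulNr.
Qed.
Lemma kform_neglr c d : B c (negl d) = - B c d.
Proof.
rewrite /kform -sumrN; apply: eq_bigr => p _; rewrite big_map -sumrN.
by apply: eq_bigr => q _ /=; rewrite mulrN mulNr.
Qed.
Lemma scl_cat a c d : scl a (c ++ d) = scl a c ++ scl a d.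
Proof. exact: map_cat. Qed.
Lemma negl_cat c d : negl (c ++ d) = negl c ++ negl d.
Proof. exact: map_cat. Qed.

Definition kformE := (kform_catl, kform_catr, kform_scll, kform_sclr,
  kform_negll, kform_neglr, scl_cat, negl_cat).

Lemma kfun_cat c d y : kfun k (c ++ d) y = kfun k c y + kfun k d y.
Proof. by rewrite /kfun big_cat. Qed.
Lemma kfun_scl a c y : kfun k (scl a c) y = a * kfun k c y.
Proof. by rewrite /kfun big_map mulr_sumr; apply: eq_bigr => p _ /=; rewrite mulrA. Qed.
Lemma kfun_negl c y : kfun k (negl c) y = - kfun k c y.
Proof. by rewrite /kfun big_map -sumrN; apply: eq_bigr => p _ /=; rewrite mulNr. Qed.
Lemma dfun_cat c d y : dfun (c ++ d) y = dfun c y + dfun d y.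
Proof. by rewrite /dfun big_cat. Qed.
Lemma dfun_scl a c y : dfun (scl a c) y = a * dfun c y.
Proof. by rewrite /dfun big_map mulr_sumr; apply: eq_bigr => p _ /=; rewrite mulrA. Qed.
Lemma dfun_negl c y : dfun (negl c) y = - dfun c y.
Proof. by rewrite /dfun big_map -sumrN; apply: eq_bigr => p _ /=; rewrite mulNr. Qed.

Lemma kform_kfun c d : B c d = \sum_(p <- c) p.2^* * kfun k d p.1.
Proof.
rewrite /kform; apply: eq_bigr => p _; rewrite /kfun mulr_sumr.
by apply: eq_bigr => q _; rewrite mulrA.
Qed.

Lemma Qcdiff0 c : B (cdiff c c) (cdiff c c) = 0.
Proof. rewrite /cdiff !kformE; ring. Qed.


Lemma sum_pred1_uniq (T : eqType) (s : seq T) y (g : T -> C) :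
  uniq s -> y \in s -> \sum_(x <- s | y == x) g x = g y.
Proof.
move=> us ys; rewrite (big_rem y) //= eqxx big1_seq ?addr0 //.
by move=> x /andP[/eqP <-]; rewrite mem_rem_uniqF.
Qed.

Lemma sum_partition (f : V * C -> C) (c : L) :
  \sum_(p <- c) f p = \sum_(x <- undup (map fst c)) \sum_(p <- c | p.1 == x) f p.
Proof.
under [RHS]eq_bigr do rewrite big_mkcond.
rewrite [RHS]exchange_big /=; apply: eq_big_seq => p pc.
rewrite -big_mkcond sum_pred1_uniq ?undup_uniq // mem_undup.
exact: map_f.
Qed.

Lemma Q_ge0 (hk : pos_def k) c : 0 <= B c c.
Proof.
set F := undup (map fst c).
pose cf x := \sum_(p <- c | p.1 == x) p.2.
have := hk F cf (undup_uniq _).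
suff -> : B c c = \sum_(x <- F) \sum_(y <- F) k x y * (cf x)^* * cf y by [].
rewrite /kform sum_partition; apply: eq_bigr => x _.
under [RHS]eq_bigr => y _ do
  rewrite /cf rmorph_sum -mulrA mulr_suml mulr_sumr.
rewrite [RHS]exchange_big /=; apply: eq_bigr => p /eqP px.
rewrite sum_partition; apply: eq_bigr => y _.
rewrite !mulr_sumr; apply: eq_bigr => q /eqP qy.
rewrite px qy; ring.
Qed.


Hypothesis hk : pos_def k.

Lemma two_neq0 : (2%:R : C) != 0. Proof. by rewrite pnatr_eq0. Qed.

Lemma kform_herm c d : B d c = (B c d)^*.
Proof.
have hc := geC0_conj (Q_ge0 hk c).
have hd := geC0_conj (Q_ge0 hk d).
have h1 := geC0_conj (Q_ge0 hk (c ++ d)).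
have h2 := geC0_conj (Q_ge0 hk (c ++ scl 'i d)).
have E1 : B (c ++ d) (c ++ d) = B c c + B d d + B c d + B d c by rewrite !kformE; ring.
have E2 : B (c ++ scl 'i d) (c ++ scl 'i d) =
   B c c + ('i^* * 'i) * B d d + 'i * B c d + 'i^* * B d c by rewrite !kformE; ring.
move: h1 h2; rewrite E1 E2 !rmorphD !rmorphM /= conjCK hc hd.
move: (B c d) (B d c) => a b h1 h2.
have e1 : a^* + b^* = a + b.
  by move: h1; rewrite -!addrA => /addrI /addrI.
have e2 : 'i^* * a^* + 'i * b^* = 'i * a + 'i^* * b.
  move: h2; rewrite -!addrA => /addrI.
  by rewrite (mulrC 'i ('i^*)) => /addrI.
move: e2; rewrite conjCi => e2.
have e3 : a^* - b^* = - a + b.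
  have := congr1 (fun z => 'i * z) e2 => /=.
  rewrite !mulrDr !mulrA !mulrN !mulNr mulCii !mulN1r !opprK => ->.
  by rewrite addrC.
apply: (mulfI two_neq0).
have : (a^* + b^*) + (a^* - b^*) = (a + b) + (- a + b) by rewrite e1 e3.
have -> : (a^* + b^*) + (a^* - b^*) = 2%:R * a^* by ring.
have -> : (a + b) + (- a + b) = 2%:R * b by ring.
by move=> ->.
Qed.

Definition qr c : R := complex.Re (B c c).

Definition nc (z : C) : R := complex.Re `|z|.

Lemma normCE (z : C) : `|z| = (nc z)%:C.
Proof. by rewrite /nc normc_def. Qed.

Lemma QE c : B c c = (qr c)%:C.
Proof.
have := Q_ge0 hk c; rewrite /qr; case: (B c c) => a b.
by rewrite lecE /= => /andP[/eqP -> _].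
Qed.

Lemma qr_ge0 c : 0 <= qr c.
Proof. by have := Q_ge0 hk c; rewrite QE lecR. Qed.

Lemma nc_ge0 (z : C) : 0 <= nc z.
Proof. by have := normr_ge0 z; rewrite normCE lecR. Qed.

Lemma ncR (x : R) : nc (x%:C) = `|x|.
Proof. by rewrite /nc normc_def /= expr0n /= addr0 sqrtr_sqr. Qed.

Lemma ncJ (z : C) : nc (z^*) = nc z.
Proof. by apply: complexI; rewrite -!normCE norm_conjC. Qed.

Lemma ncM (z w : C) : nc (z * w) = nc z * nc w.
Proof. by apply: complexI; rewrite rmorphM /= -!normCE normrM. Qed.

Lemma ncN (z : C) : nc (- z) = nc z.
Proof. by apply: complexI; rewrite -!normCE normrN. Qed.

Lemma ncD (z w : C) : nc (z + w) <= nc z + nc w.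
Proof. by rewrite -lecR rmorphD /= -!normCE ler_normD. Qed.

Lemma ncB (z w : C) : nc (z - w) = nc (w - z).
Proof. by rewrite -ncN opprB. Qed.

Lemma nc_eq0 (z : C) : nc z = 0 -> z = 0.
Proof. by move=> h; apply/normr0_eq0; rewrite normCE h. Qed.

Lemma nc0 : nc 0 = 0.
Proof. by rewrite /nc normr0. Qed.

Lemma qr_norm c : qr c = nc (B c c).
Proof. by rewrite QE ncR ger0_norm // qr_ge0. Qed.

Lemma ReR (x : R) : complex.Re (x%:C) = x. Proof. by []. Qed.

Lemma rcE (x : R) : ((x%:C)%C : C) = (x%:C)%C. Proof. by []. Qed.

Lemma conjR (x : R) : (x%:C)^* = x%:C.
Proof. by apply: conj_Creal; apply/complex_realP; exists x. Qed.

Lemma nc_herm c d : nc (B d c) = nc (B c d).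
Proof. by rewrite kform_herm ncJ. Qed.

Lemma cs_ineq c d : 2 * nc (B c d) <= qr c + qr d.
Proof.
have [z0|zn0] := eqVneq (B c d) 0.
  by rewrite z0 nc0 mulr0 addr_ge0 // qr_ge0.
set w : C := `|B c d| / B c d.
have hw : w * B c d = `|B c d| by rewrite /w mulfVK.
have hw2 : w^* * w = 1.
  rewrite -normCKC /w normrM normfV normr_id mulfV ?expr1n //.
  by rewrite normr_eq0.
have := Q_ge0 hk (c ++ negl (scl w d)).
have -> : B (c ++ negl (scl w d)) (c ++ negl (scl w d)) =
  B c c + (w^* * w) * B d d - w * B c d - w^* * (B c d)^*.
  by rewrite !kformE (kform_herm c d); ring.
have -> : w^* * (B c d)^* = (w * B c d)^* by rewrite [RHS]rmorphM.
rewrite hw2 hw conj_normC mul1r !QE normCE => h.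
have : 0 <= (qr c + qr d - nc (B c d) - nc (B c d))%:C by rewrite !rmorphB rmorphD.
rewrite ler0c; lra.
Qed.

Lemma qr_scl a c : qr (scl a c) = nc a ^+ 2 * qr c.
Proof.
apply: complexI; rewrite rmorphM rmorphXn /= -!QE !kformE -normCE normCKC.
by rewrite mulrA.
Qed.

Lemma cs_scaled c d t : 0 < t -> 2 * nc (B c d) <= t * qr c + qr d / t.
Proof.
move=> t0; have := cs_ineq (scl t%:C c) d.
rewrite qr_scl kform_scll conjR ncM ncR (ger0_norm (ltW t0)) => h.
have hu : qr d = (qr d / t) * t by rewrite mulfVK ?gt_eqF.
move: h; rewrite [X in _ <= _ + X]hu; move: (qr d / t) => u h.
have := qr_ge0 c; have := nc_ge0 (B c d); nra.
Qed.

Lemma qr_negl c : qr (negl c) = qr c.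
Proof. by rewrite /qr !kformE opprK. Qed.

Lemma qr_cat c d : qr (c ++ d) <= 2 * qr c + 2 * qr d.
Proof.
have e : B (c ++ d) (c ++ d) = B c c + B d d + (B c d + B d c)
  by rewrite !kformE; ring.
rewrite qr_norm e.
have h1 := ncD (B c c + B d d) (B c d + B d c).
have h2 := ncD (B c c) (B d c).
have h3 := ncD (B c d) (B d c).
have h4 := ncD (B c c) (B d d).
have h5 := cs_ineq c d.
rewrite (nc_herm c d) in h3; rewrite -!qr_norm in h4.
lra.
Qed.



Lemma ltc0 (e : C) : 0 < e -> e = (complex.Re e)%:C /\ 0 < complex.Re e.
Proof. by case: e => a b; rewrite ltcE /= => /andP[/eqP -> h]. Qed.

Lemma ltr0c (x : R) : ((0 : C) < x%:C) = (0 < x).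
Proof. by rewrite ltcE /= eqxx. Qed.

Lemma cconvE (u : nat -> C) z : cconv u z <->
  forall e : R, 0 < e -> exists N, forall n, (N <= n)%N -> nc (u n - z) < e.
Proof.
split=> h e e0.
  have e0' : (0 : C) < e%:C by rewrite ltr0c.
  have [N hN] := h _ e0'.
  by exists N => n /hN; rewrite normCE ltcR.
have [-> e0'] := ltc0 e0.
have [N hN] := h _ e0'; exists N => n /hN.
by rewrite normCE ltcR.
Qed.

Lemma nc_small (z : C) : (forall e : R, 0 < e -> nc z < e) -> z = 0.
Proof.
move=> h; apply: nc_eq0; apply/eqP; rewrite eq_le nc_ge0 andbT.
by apply/ler_addgt0Pr => e /h /ltW; rewrite add0r.
Qed.

Lemma ncBD (z w x : C) : nc (z - w) <= nc (z - x) + nc (x - w).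
Proof. by have := ncD (z - x) (x - w); rewrite addrA subrK. Qed.

Lemma cconv_unique (u : nat -> C) (z1 z2 : C) : cconv u z1 -> cconv u z2 -> z1 = z2.
Proof.
move=> /cconvE h1 /cconvE h2; apply/eqP; rewrite -subr_eq0; apply/eqP.
apply: nc_small => e e0.
have [N1 hN1] := h1 (e/2) (divr_gt0 e0 (ltr0Sn _ 1)).
have [N2 hN2] := h2 (e/2) (divr_gt0 e0 (ltr0Sn _ 1)).
have a1 := hN1 (maxn N1 N2) (leq_maxl _ _).
have a2 := hN2 (maxn N1 N2) (leq_maxr _ _).
have := ncBD z1 z2 (u (maxn N1 N2)).
rewrite ncB in a1; lra.
Qed.

Lemma cconv_ext (u v : nat -> C) (z : C) : (forall n, u n = v n) -> cconv u z -> cconv v z.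
Proof. by move=> e h; have -> : v = u by apply/funext => n; rewrite e. Qed.

Lemma cconv_const (z : C) : cconv (fun _ => z) z.
Proof. by apply/cconvE => e e0; exists 0%N => n _; rewrite subrr nc0. Qed.

Lemma cconv_add (u v : nat -> C) (a b : C) : cconv u a -> cconv v b ->
  cconv (fun n => u n + v n) (a + b).
Proof.
move=> /cconvE h1 /cconvE h2; apply/cconvE => e e0.
have [N1 hN1] := h1 (e/2) (divr_gt0 e0 (ltr0Sn _ 1)).
have [N2 hN2] := h2 (e/2) (divr_gt0 e0 (ltr0Sn _ 1)).
exists (maxn N1 N2) => n hn.
have a1 := hN1 n (leq_trans (leq_maxl _ _) hn).
have a2 := hN2 n (leq_trans (leq_maxr _ _) hn).
have := ncD (u n - a) (v n - b).
have -> : u n - a + (v n - b) = u n + v n - (a + b) by ring.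
lra.
Qed.

Lemma cconv_scale (w : C) (u : nat -> C) (a : C) : cconv u a -> cconv (fun n => w * u n) (w * a).
Proof.
move=> /cconvE h; apply/cconvE => e e0.
have w0 : 0 < nc w + 1 by have := nc_ge0 w; lra.
have [N hN] := h (e / (nc w + 1)) (divr_gt0 e0 w0).
exists N => n /hN hn.
rewrite -mulrBr ncM.
have := nc_ge0 w; have := nc_ge0 (u n - a) => g1 g2.
rewrite ltr_pdivlMr // in hn.
nra.
Qed.

Lemma cconv_conj (u : nat -> C) (a : C) : cconv u a -> cconv (fun n => (u n)^*) a^*.
Proof.
move=> /cconvE h; apply/cconvE => e /h [N hN]; exists N => n /hN.
by rewrite -rmorphB ncJ.
Qed.

Lemma cconv_sub (u v : nat -> C) (a b : C) : cconv u a -> cconv v b ->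
  cconv (fun n => u n - v n) (a - b).
Proof.
move=> h1 /(cconv_scale (-1)) h2.
have := cconv_add h1 h2; rewrite mulN1r; apply: cconv_ext => n /=; ring.
Qed.

Lemma cconv_sum (T : Type) (s : seq T) (f : T -> nat -> C) (l : T -> C) :
  (forall t, cconv (f t) (l t)) ->
  cconv (fun n => \sum_(t <- s) f t n) (\sum_(t <- s) l t).
Proof.
move=> h; elim: s => [|t s IH].
  by rewrite big_nil; apply: cconv_ext (cconv_const 0) => n; rewrite big_nil.
rewrite big_cons; apply: cconv_ext (cconv_add (h t) IH) => n.
by rewrite big_cons.
Qed.

Lemma cconv_bound (u : nat -> C) (a : C) (b : R) : cconv u a ->
  (exists N, forall n, (N <= n)%N -> nc (u n) <= b) -> nc a <= b.
Proof.
move=> /cconvE h [N hN]; apply/ler_addgt0Pr => e /h [N' hN'].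
have a1 := hN' (maxn N N') (leq_maxr _ _).
have a2 := hN (maxn N N') (leq_maxl _ _).
have := ncD (u (maxn N N')) (a - u (maxn N N')).
rewrite addrC subrK ncB; lra.
Qed.

Lemma real_cauchy (u : nat -> R) :
  (forall e, 0 < e -> exists N, forall m n, (N <= m)%N -> (N <= n)%N -> `|u m - u n| < e) ->
  exists l, forall e, 0 < e -> exists N, forall n, (N <= n)%N -> `|u n - l| < e.
Proof.
move=> h.
pose A := [set x : R | exists N, forall n, (N <= n)%N -> x <= u n].
have [N1 hN1] := h 1 ltr01.
have A0 : A !=set0.
  exists (u N1 - 1); exists N1 => n hn.
  have := hN1 n N1 hn (leqnn _); rewrite ltr_norml => /andP[a b]; lra.
have Aub : forall x, A x -> x <= u N1 + 1.
  move=> x [N hN].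
  have a1 := hN (maxn N N1) (leq_maxl _ _).
  have := hN1 (maxn N N1) N1 (leq_maxr _ _) (leqnn _).
  rewrite ltr_norml => /andP[a b]; lra.
have hs : has_sup A by split => //; exists (u N1 + 1) => x /Aub.
exists (sup A) => e e0.
have [N hN] := h (e/2) (divr_gt0 e0 (ltr0Sn _ 1)).
have l1 : u N - e/2 <= sup A.
  apply: sup_upper_bound => //; exists N => n hn.
  have := hN n N hn (leqnn _); rewrite ltr_norml => /andP[a b]; lra.
have l2 : sup A <= u N + e/2.
  apply: ge_sup => // x [M hM].
  have a1 := hM (maxn M N) (leq_maxl _ _).
  have := hN (maxn M N) N (leq_maxr _ _) (leqnn _).
  rewrite ltr_norml => /andP[a b]; lra.
exists N => n hn.
have := hN n N hn (leqnn _); rewrite !ltr_norml => /andP[a b].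
apply/andP; split; lra.
Qed.

Definition kcauchy (c : nat -> L) := forall e : R, 0 < e -> exists N,
  forall m n, (N <= m)%N -> (N <= n)%N -> qr (cdiff (c m) (c n)) < e.

Lemma normQ x : `|B x x| = (qr x)%:C.
Proof. by rewrite normCE -qr_norm. Qed.

Lemma kapproxP c f : kapprox k c f <->
  kcauchy c /\ forall y, cconv (fun n => kfun k (c n) y) (f y).
Proof.
split=> -[h1 h2]; split=> // e e0.
  have e0' : (0 : C) < e%:C by rewrite ltr0c.
  have [N hN] := h1 _ e0'; exists N => m n hm hn.
  by have := hN m n hm hn; rewrite normQ ltcR.
have [-> e0'] := ltc0 e0.
have [N hN] := h1 _ e0'; exists N => m n hm hn.
by rewrite normQ ltcR; apply: hN.
Qed.

Lemma qr_eq x y : B x x = B y y -> qr x = qr y.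
Proof. by rewrite /qr => ->. Qed.

Lemma key_lemma (e : nat -> L) : kcauchy e ->
  (forall y, cconv (fun n => kfun k (e n) y) 0) ->
  forall eps, 0 < eps -> exists N, forall n, (N <= n)%N -> qr (e n) < eps.
Proof.
move=> hc hp eps e0.
have [N hN] := hc (eps/2) (divr_gt0 e0 (ltr0Sn _ 1)).
have hB : cconv (fun n => B (e N) (e n)) 0.
  have := @cconv_sum _ (e N) (fun p n => p.2^* * kfun k (e n) p.1)
     (fun p => p.2^* * 0) (fun p => cconv_scale _ (hp p.1)).
  under eq_bigr do rewrite mulr0.
  rewrite big1 // => h; apply: cconv_ext h => n; by rewrite kform_kfun.
move/cconvE: hB => /(_ (eps/4)) [|N' hN']; first by apply: divr_gt0 => //.
exists (maxn N N') => n hn.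
have a1 := hN n N (leq_trans (leq_maxl _ _) hn) (leqnn _).
have a2 := hN' n (leq_trans (leq_maxr _ _) hn); rewrite subr0 in a2.
have eq1 : B (e n) (e n) = B (cdiff (e n) (e N)) (e n) + B (e N) (e n)
  by rewrite /cdiff !kformE; ring.
have := ncD (B (cdiff (e n) (e N)) (e n)) (B (e N) (e n)).
rewrite -eq1 -qr_norm => a3.
have := cs_ineq (cdiff (e n) (e N)) (e n).
lra.
Qed.

Lemma kbounded c : kcauchy c -> exists K N, 0 <= K /\
  forall n, (N <= n)%N -> qr (c n) <= K.
Proof.
move=> hc; have [N hN] := hc 1 ltr01.
exists (2 + 2 * qr (c N)), N; split.
  by have := qr_ge0 (c N); lra.
move=> n hn.
have -> : qr (c n) = qr (cdiff (c n) (c N) ++ c N).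
  by apply: qr_eq; rewrite /cdiff !kformE; ring.
have := qr_cat (cdiff (c n) (c N)) (c N).
have := hN n N hn (leqnn _); lra.
Qed.

Lemma Bsmall (K eps : R) : 0 <= K -> 0 < eps -> exists2 d, 0 < d &
  forall u v, qr u < d -> qr v <= K -> nc (B u v) < eps /\ nc (B v u) < eps.
Proof.
move=> K0 e0.
pose t := 2 * (K + 1) / eps.
have t0 : 0 < t by rewrite /t divr_gt0 // mulr_gt0 //; lra.
exists (eps / (2 * t)); first by rewrite divr_gt0 // mulr_gt0.
move=> u v hu hv.
have htd : t * (eps / (2 * t)) = eps / 2.
  by rewrite /t; field; apply/andP; split; rewrite ?gt_eqF //; lra.
have hKt : qr v / t <= eps / 2.
  rewrite ler_pdivrMr // /t; have -> : eps / 2 * (2 * (K + 1) / eps) = K + 1.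
    by field; rewrite gt_eqF.
  lra.
have h1 : t * qr u < eps / 2 by rewrite -htd ltr_pM2l.
have c1 := cs_scaled u v t0.
rewrite (nc_herm u v); have := nc_ge0 (B u v).
split; lra.
Qed.

Lemma cdiff_cauchy c c' : kcauchy c -> kcauchy c' ->
  kcauchy (fun n => cdiff (c n) (c' n)).
Proof.
move=> h1 h2 e e0.
have [N1 hN1] := h1 (e/4) (divr_gt0 e0 (ltr0Sn _ 3)).
have [N2 hN2] := h2 (e/4) (divr_gt0 e0 (ltr0Sn _ 3)).
exists (maxn N1 N2) => m n hm hn.
have a1 := hN1 m n (leq_trans (leq_maxl _ _) hm) (leq_trans (leq_maxl _ _) hn).
have a2 := hN2 m n (leq_trans (leq_maxr _ _) hm) (leq_trans (leq_maxr _ _) hn).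
have -> : qr (cdiff (cdiff (c m) (c' m)) (cdiff (c n) (c' n))) =
   qr (cdiff (c m) (c n) ++ negl (cdiff (c' m) (c' n))).
  by apply: qr_eq; rewrite /cdiff !kformE; ring.
have := qr_cat (cdiff (c m) (c n)) (negl (cdiff (c' m) (c' n))).
rewrite qr_negl; lra.
Qed.

Lemma approx_diff c c' f : kapprox k c f -> kapprox k c' f ->
  forall eps, 0 < eps -> exists N, forall n, (N <= n)%N ->
    qr (cdiff (c n) (c' n)) < eps.
Proof.
move=> /kapproxP [h1 p1] /kapproxP [h2 p2].
apply: key_lemma; first exact: cdiff_cauchy.
move=> y; have := cconv_sub (p1 y) (p2 y); rewrite subrr.
by apply: cconv_ext => n; rewrite /cdiff kfun_cat kfun_negl.
Qed.

Lemma unq c c' d d' f g : kapprox k c f -> kapprox k c' f ->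
  kapprox k d g -> kapprox k d' g ->
  cconv (fun n => B (c n) (d n) - B (c' n) (d' n)) 0.
Proof.
move=> hc hc' hd hd'; apply/cconvE => eps e0.
have [K1 [N1 [K10 hK1]]] := kbounded (proj1 (proj1 (kapproxP _ _) hd)).
have [K2 [N2 [K20 hK2]]] := kbounded (proj1 (proj1 (kapproxP _ _) hc')).
have [d1 d10 hd1] := Bsmall K10 (divr_gt0 e0 (ltr0Sn _ 1)).
have [d2 d20 hd2] := Bsmall K20 (divr_gt0 e0 (ltr0Sn _ 1)).
have [N3 hN3] := approx_diff hc hc' d10.
have [N4 hN4] := approx_diff hd hd' d20.
exists (maxn (maxn N1 N2) (maxn N3 N4)) => n hn.
have hn1 : (N1 <= n)%N by apply: leq_trans hn; rewrite !leq_max leqnn.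
have hn2 : (N2 <= n)%N by apply: leq_trans hn; rewrite !leq_max leqnn !orbT.
have hn3 : (N3 <= n)%N by apply: leq_trans hn; rewrite !leq_max leqnn !orbT.
have hn4 : (N4 <= n)%N by apply: leq_trans hn; rewrite !leq_max leqnn !orbT.
have [a1 _] := hd1 _ _ (hN3 n hn3) (hK1 n hn1).
have [_ a2] := hd2 _ _ (hN4 n hn4) (hK2 n hn2).
have -> : B (c n) (d n) - B (c' n) (d' n) - 0 =
   B (cdiff (c n) (c' n)) (d n) + B (c' n) (cdiff (d n) (d' n)).
  by rewrite /cdiff !kformE; ring.
have := ncD (B (cdiff (c n) (c' n)) (d n)) (B (c' n) (cdiff (d n) (d' n))).
lra.
Qed.

Lemma hipc c d f g z : kapprox k c f -> kapprox k d g ->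
  cconv (fun n => B (c n) (d n)) z -> Hip k f g = z.
Proof.
move=> hc hd hz; rewrite /Hip.
set P := [set z | _].
have Pz : P z by exists c, d.
have [c' [d' [hc' hd' hz']]] := xgetPex 0 (ex_intro _ z Pz).
move: (xget 0 P) hz' => z' hz'.
have := cconv_sub hz hz'.
move/cconv_unique => /(_ _ (unq hc hc' hd hd')) /eqP.
by rewrite subr_eq0 => /eqP <-.
Qed.

Lemma hdiag g f : kapprox k g f ->
  cconv (fun n => B (g n) (g n)) (Hip k f f).
Proof.
move=> hg.
have hc := proj1 (proj1 (kapproxP _ _) hg).
have [l hl] : exists l, forall e, 0 < e -> exists N, forall n, (N <= n)%N ->
    `|qr (g n) - l| < e.
  apply: real_cauchy => eps e0.
  have [K [N0 [K0 hK]]] := kbounded hc.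
  have [d d0 hd] := Bsmall K0 (divr_gt0 e0 (ltr0Sn _ 1)).
  have [N hN] := hc d d0.
  exists (maxn N0 N) => m n hm hn.
  have hm0 := leq_trans (leq_maxl _ _) hm.
  have hn0 := leq_trans (leq_maxl _ _) hn.
  have hmn := hN m n (leq_trans (leq_maxr _ _) hm) (leq_trans (leq_maxr _ _) hn).
  have [a1 _] := hd _ _ hmn (hK m hm0).
  have [_ a2] := hd _ _ hmn (hK n hn0).
  have -> : `|qr (g m) - qr (g n)| = nc (B (g m) (g m) - B (g n) (g n)).
    by rewrite !QE -rmorphB ncR.
  have -> : B (g m) (g m) - B (g n) (g n) =
     B (cdiff (g m) (g n)) (g m) + B (g n) (cdiff (g m) (g n)).
    by rewrite /cdiff !kformE; ring.
  have := ncD (B (cdiff (g m) (g n)) (g m)) (B (g n) (cdiff (g m) (g n))).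
  lra.
have hl' : cconv (fun n => B (g n) (g n)) l%:C.
  apply/cconvE => e /hl [N hN]; exists N => n /hN.
  by rewrite QE -rmorphB ncR.
by rewrite (hipc hg hg hl').
Qed.

Lemma kapprox_const c : kapprox k (fun _ => c) (kfun k c).
Proof.
apply/kapproxP; split; last by move=> y; exact: cconv_const.
move=> e e0; exists 0%N => m n _ _.
by rewrite qr_norm Qcdiff0 nc0.
Qed.

Lemma kapprox_lin a c f d g : kapprox k c f -> kapprox k d g ->
  kapprox k (fun n => scl a (c n) ++ d n) (fun y => a * f y + g y).
Proof.
move=> /kapproxP [h1 p1] /kapproxP [h2 p2]; apply/kapproxP; split; last first.
  move=> y; have := cconv_add (cconv_scale a (p1 y)) (p2 y).
  by apply: cconv_ext => n; rewrite kfun_cat kfun_scl.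
move=> e e0.
have a0 : 0 < 4 * (nc a ^+ 2 + 1) by have := nc_ge0 a; nra.
have [N1 hN1] := h1 _ (divr_gt0 e0 a0).
have [N2 hN2] := h2 (e/4) (divr_gt0 e0 (ltr0Sn _ 3)).
exists (maxn N1 N2) => m n hm hn.
have b1 := hN1 m n (leq_trans (leq_maxl _ _) hm) (leq_trans (leq_maxl _ _) hn).
have b2 := hN2 m n (leq_trans (leq_maxr _ _) hm) (leq_trans (leq_maxr _ _) hn).
have -> : qr (cdiff (scl a (c m) ++ d m) (scl a (c n) ++ d n)) =
   qr (scl a (cdiff (c m) (c n)) ++ cdiff (d m) (d n)).
  by apply: qr_eq; rewrite /cdiff !kformE; ring.
have := qr_cat (scl a (cdiff (c m) (c n))) (cdiff (d m) (d n)).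
rewrite qr_scl.
move: b1; rewrite ltr_pdivlMr // => b1.
have := qr_ge0 (cdiff (c m) (c n)); have := nc_ge0 a.
nra.
Qed.

Lemma inH_lin a f g : inH k f -> inH k g -> inH k (fun y => a * f y + g y).
Proof. by move=> [c hc] [d hd]; exists (fun n => scl a (c n) ++ d n); apply: kapprox_lin. Qed.

Lemma inH_kfun c : inH k (kfun k c).
Proof. by exists (fun _ => c); apply: kapprox_const. Qed.

Lemma fsubE (f g : V -> C) : fsub f g = (fun y => -1 * g y + f y).
Proof. by apply/funext => y; rewrite /fsub; ring. Qed.

Lemma inH_fsub f g : inH k f -> inH k g -> inH k (fsub f g).
Proof. by move=> hf hg; rewrite fsubE; apply: inH_lin. Qed.

Hypothesis hdelta : forall x : V, inH k (delta x).

Lemma inH_dfun c : inH k (dfun c).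
Proof.
elim: c => [|p c IH].
  have -> : dfun [::] = kfun k [::].
    by apply/funext => y; rewrite /dfun /kfun !big_nil.
  exact: inH_kfun.
have -> : dfun (p :: c) = (fun y => p.2 * delta p.1 y + dfun c y).
  by apply/funext => y; rewrite /dfun big_cons.
exact: inH_lin.
Qed.

Lemma conv_delta e y a : kapprox k a (delta y) ->
  cconv (fun n => B e (a n)) ((dfun e y)^*).
Proof.
move=> /kapproxP [_ ha].
have := @cconv_sum _ e (fun p n => p.2^* * kfun k (a n) p.1)
     (fun p => p.2^* * delta y p.1) (fun p => cconv_scale _ (ha p.1)).
have -> : \sum_(p <- e) p.2^* * delta y p.1 = (dfun e y)^*.
  rewrite /dfun rmorph_sum; apply: eq_bigr => p _.
  by rewrite rmorphM /= /delta conjC_nat eq_sym.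
by apply: cconv_ext => n; rewrite kform_kfun.
Qed.

Lemma wd c d : kfun k c = kfun k d -> dfun c = dfun d.
Proof.
move=> hcd; apply/funext => y.
set e := cdiff c d.
have he : forall x, kfun k e x = 0.
  by move=> x; rewrite /e /cdiff kfun_cat kfun_negl hcd subrr.
have [a ha] := hdelta y.
have h0 : forall n, B e (a n) = 0.
  move=> n; rewrite (kform_herm (a n) e) kform_kfun big1 ?rmorph0 //.
  by move=> p _; rewrite he mulr0.
have := conv_delta e ha.
have -> : (fun n => B e (a n)) = (fun _ => 0) by apply/funext => n; exact: h0.
move/(cconv_unique (cconv_const 0))/esym/eqP; rewrite conjC_eq0.
by rewrite /e /cdiff dfun_cat dfun_negl subr_eq0 => /eqP.
Qed.

Lemma coefb y : exists K, 0 <= K /\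
  forall e t, 0 < t -> 2 * nc (dfun e y) <= t * qr e + K / t.
Proof.
have [a ha] := hdelta y.
have [K [N [K0 hK]]] := kbounded (proj1 (proj1 (kapproxP _ _) ha)).
exists K; split => // e t t0.
have hc := cconv_conj (conv_delta e ha); rewrite conjCK in hc.
rewrite -ler_pdivlMl // mulrC.
apply: (cconv_bound hc); exists N => n hn.
rewrite -(kform_herm e (a n)) (nc_herm e (a n)) ler_pdivlMr //.
have := cs_scaled e (a n) t0.
have : qr (a n) / t <= K / t by rewrite ler_pM2r ?invr_gt0 // hK.
lra.
Qed.

Lemma eval1 (g : L) y : kfun k g y = B [:: (y, 1)] g.
Proof. by rewrite kform_kfun big_cons big_nil /= conjC1 mul1r addr0. Qed.

Lemma pointwise f y t : inH k f -> 0 < t ->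
  2 * nc (f y) <= t * qr [:: (y, 1)] + nc (Hip k f f) / t.
Proof.
move=> [g hg] t0.
have hd := hdiag hg.
have [_ hp] := proj1 (kapproxP _ _) hg.
apply/ler_addgt0Pr => eps e0.
rewrite -ler_pdivlMl // mulrC.
apply: (cconv_bound (hp y)).
move/cconvE: hd => /(_ (t * eps)) [|N hN]; first by rewrite mulr_gt0.
exists N => n /hN hn.
rewrite eval1 ler_pdivlMr //.
have := cs_scaled [:: (y, 1)] (g n) t0.
have : qr (g n) <= nc (Hip k f f) + t * eps.
  rewrite qr_norm; have := ncBD (B (g n) (g n)) 0 (Hip k f f).
  by rewrite !subr0; lra.
move=> h1.
have e2 : (nc (Hip k f f) + t * eps) / t = nc (Hip k f f) / t + eps.
  by rewrite mulrDl (mulrC t) -mulrA divff ?mulr1 // gt_eqF.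
have : qr (g n) / t <= (nc (Hip k f f) + t * eps) / t.
  by rewrite ler_pM2r ?invr_gt0.
rewrite e2; lra.
Qed.

Lemma sq_tri (a p q : R) : a <= p + q -> 0 <= a -> 0 <= p -> 0 <= q ->
  a ^+ 2 <= 2 * p ^+ 2 + 2 * q ^+ 2.
Proof. move=> h1 h2 h3 h4.
have h5 : a * a <= (p + q) * (p + q) by apply: ler_pM.
have h6 : 0 <= (p - q) * (p - q) by rewrite -expr2 sqr_ge0.
rewrite !expr2. nra. Qed.

Lemma sum_subset_le (T : numDomainType) (F G : seq V) (h : V -> T) :
  uniq F -> uniq G -> {subset F <= G} -> (forall x, 0 <= h x) ->
  \sum_(x <- F) h x <= \sum_(x <- G) h x.
Proof.
move=> uF uG sFG h0.
have pG : perm_eq ([seq x <- G | mem F x] ++ [seq x <- G | predC (mem F) x]) G.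
  by rewrite (perm_filterC (mem F) G) perm_refl.
rewrite -[X in _ <= X](perm_big _ pG) big_cat /=.
have -> : \sum_(x <- F) h x = \sum_(x <- [seq x <- G | x \in F]) h x.
  apply: perm_big; apply: uniq_perm => //; first exact: filter_uniq.
  move=> x; rewrite mem_filter /=; case xF: (x \in F) => //=.
  by rewrite sFG.
by rewrite lerDl sumr_ge0.
Qed.

Lemma sum_delta (F : seq V) y (h : V -> C) : uniq F -> y \in F ->
  \sum_(x <- F) (x == y)%:R * h x = h y.
Proof.
move=> uF yF; rewrite -(sum_pred1_uniq h uF yF) [RHS]big_mkcond.
by apply: eq_bigr => x _; rewrite eq_sym; case: (y == x); rewrite ?mul1r ?mul0r.
Qed.

Lemma dfun_supp c x : x \notin map fst c -> dfun c x = 0.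
Proof.
move=> hx; rewrite /dfun big1_seq // => p /andP[_ pc].
rewrite /delta; case: eqP => [e|]; last by rewrite mulr0.
by move: hx; rewrite e map_f.
Qed.

Lemma normC2 (z : C) : `|z| ^+ 2 = (nc z ^+ 2)%:C.
Proof. by rewrite normCE rmorphXn. Qed.

Lemma inl2_fin (f : V -> C) (s : seq V) :
  (forall x, x \notin s -> f x = 0) -> inl2 f.
Proof.
move=> hf; exists (\sum_(x <- undup s) `|f x| ^+ 2) => F uF.
rewrite (bigID (fun x => x \in s)) /= [X in _ + X]big1 ?addr0; last first.
  by move=> x /hf ->; rewrite normr0 expr0n.
rewrite -big_filter; apply: sum_subset_le; rewrite ?undup_uniq ?filter_uniq //.
  by move=> x; rewrite mem_filter mem_undup => /andP[].
by move=> x; rewrite exprn_ge0.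
Qed.

Lemma inl2_dfun c : inl2 (dfun c).
Proof. by apply: (inl2_fin (s := map fst c)) => x; apply: dfun_supp. Qed.

Lemma inl2_sub f g : inl2 f -> inl2 g -> inl2 (fsub f g).
Proof.
move=> [M1 h1] [M2 h2]; exists (2 * M1 + 2 * M2) => F uF.
apply: le_trans (_ : \sum_(x <- F) (2 * `|f x| ^+ 2 + 2 * `|g x| ^+ 2) <= _).
  apply: ler_sum => x _; rewrite /fsub !normC2.
  have -> : 2 * (nc (f x) ^+ 2)%:C + 2 * (nc (g x) ^+ 2)%:C =
     (2 * nc (f x) ^+ 2 + 2 * nc (g x) ^+ 2)%:C :> C.
    by rewrite rmorphD !rmorphM rmorph_nat.
  rewrite lecR.
  have := ncD (f x) (- g x); rewrite ncN => h.
  by apply: sq_tri => //; apply: nc_ge0.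
rewrite big_split /= -!mulr_sumr.
by apply: lerD; rewrite ler_pM2l ?ltr0Sn //; [apply: h1 | apply: h2].
Qed.

Lemma l2c f g z0 :
  (forall e : R, 0 < e -> exists F0 : seq V, forall F : seq V, uniq F -> {subset F0 <= F} ->
     nc (\sum_(x <- F) (f x)^* * g x - z0) < e) -> l2ip f g = z0.
Proof.
move=> h; rewrite /l2ip; set P := [set z | _].
have Pz0 : P z0.
  move=> e /ltc0 [-> e0]; have [F0 hF0] := h _ e0; exists F0 => F uF sF.
  by rewrite normCE ltcR; apply: hF0.
have := xgetPex 0 (ex_intro _ z0 Pz0); move: (xget 0 P) => z Pz.
apply/eqP; rewrite -subr_eq0; apply/eqP; apply: nc_small => e e0.
have e2 : (0 : C) < (e/2)%:C by rewrite ltr0c divr_gt0.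
have [F1 hF1] := Pz _ e2.
have [F0 hF0] := h _ (divr_gt0 e0 (ltr0Sn _ 1)).
have uF : uniq (undup (F0 ++ F1)) by apply: undup_uniq.
have s0 : {subset F0 <= undup (F0 ++ F1)}.
  by move=> x; rewrite mem_undup mem_cat => ->.
have s1 : {subset F1 <= undup (F0 ++ F1)}.
  by move=> x; rewrite mem_undup mem_cat => ->; rewrite orbT.
have a0 := hF0 _ uF s0.
have := hF1 _ uF s1; rewrite normCE ltcR => a1.
have := ncBD z z0 (\sum_(x <- undup (F0 ++ F1)) (f x)^* * g x).
rewrite ncB in a1; lra.
Qed.

Lemma l2norm h : inl2 h -> exists s : R, l2ip h h = s%:C /\
  forall y, nc (h y) ^+ 2 <= s.
Proof.
move=> [M hM].
pose sF (F : seq V) := \sum_(x <- F) nc (h x) ^+ 2.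
have hsF : forall F, \sum_(x <- F) (h x)^* * h x = (sF F)%:C.
  move=> F; rewrite rmorph_sum; apply: eq_bigr => x _.
  by rewrite -normCKC normC2.
have bnd : forall F, uniq F -> sF F <= complex.Re M.
  move=> F uF; have := hM F uF.
  have -> : \sum_(x <- F) `|h x| ^+ 2 = (sF F)%:C.
    by rewrite rmorph_sum; apply: eq_bigr => x _; rewrite normC2.
  by case: M {hM} => a b; rewrite lecE /= => /andP[].
pose E := [set r : R | exists F, uniq F /\ r = sF F].
have hs : has_sup E.
  split; first by exists (sF [::]), [::].
  by exists (complex.Re M) => r [F [uF ->]]; apply: bnd.
have sF0 : forall F, 0 <= sF F by move=> F; apply: sumr_ge0 => x _; apply: exprn_ge0; apply: nc_ge0.
exists (sup E); split.
  apply: l2c => e e0.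
  have [r [F0 [uF0 ->]] hr] := sup_adherent e0 hs.
  exists F0 => F uF sub.
  rewrite hsF -rmorphB ncR.
  have l1 : sF F0 <= sF F.
    by apply: sum_subset_le => // x; apply: exprn_ge0; apply: nc_ge0.
  have l2 : sF F <= sup E by apply: sup_upper_bound => //; exists F.
  by rewrite ltr_norml; apply/andP; split; lra.
move=> y; have : sF [:: y] <= sup E by apply: sup_upper_bound => //; exists [:: y].
by rewrite /sF big_cons big_nil addr0.
Qed.

Lemma l2coord (v : nat -> V -> C) (u : V -> C) :
  (forall n, inl2 (fsub (v n) u)) -> nconv l2ip v u ->
  forall y, cconv (fun n => v n y) (u y).
Proof.
move=> hl /cconvE hc y; apply/cconvE => e e0.
have [N hN] := hc (e ^+ 2) (exprn_gt0 _ e0).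
exists N => n /hN.
have [s [-> hs]] := l2norm (hl n).
rewrite subr0 ncR => hsn.
have := hs y; rewrite /fsub => h1.
have := nc_ge0 (v n y - u y) => h2.
have h3 : s < e ^+ 2 by move: hsn; rewrite ltr_norml => /andP[].
rewrite !expr2 in h1 h3.
nra.
Qed.

Lemma dsum (F : seq V) c (h : V -> C) : uniq F -> {subset map fst c <= F} ->
  \sum_(x <- F) (dfun c x)^* * h x = \sum_(q <- c) q.2^* * h q.1.
Proof.
move=> uF sF.
under eq_bigr do rewrite /dfun rmorph_sum mulr_suml.
rewrite exchange_big /=; apply: eq_big_seq => q qc.
rewrite -(sum_delta h uF (sF _ (map_f _ qc))) mulr_sumr.
apply: eq_bigr => x _; rewrite rmorphM /= /delta conjC_nat; ring.
Qed.

Lemma dsum2 (F : seq V) c (h : V -> C) : uniq F -> {subset map fst c <= F} ->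
  \sum_(x <- F) (h x)^* * dfun c x = \sum_(q <- c) q.2 * (h q.1)^*.
Proof.
move=> uF sF.
have := congr1 Num.conj (dsum h uF sF).
rewrite !rmorph_sum => E.
have -> : \sum_(x <- F) (h x)^* * dfun c x = \sum_(i <- F) ((dfun c i)^* * h i)^*.
  by apply: eq_bigr => x _; rewrite rmorphM /= conjCK mulrC.
rewrite E; apply: eq_bigr => q _; by rewrite rmorphM /= conjCK.
Qed.

Lemma l2_dfun_l c h : l2ip (dfun c) h = \sum_(q <- c) q.2^* * h q.1.
Proof.
apply: l2c => e e0; exists (map fst c) => F uF sF.
by rewrite dsum // subrr nc0.
Qed.

Lemma l2_dfun_r c h : l2ip h (dfun c) = \sum_(q <- c) q.2 * (h q.1)^*.
Proof.
apply: l2c => e e0; exists (map fst c) => F uF sF.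
by rewrite dsum2 // subrr nc0.
Qed.

Lemma hip_kfun_l c g : inH k g -> Hip k (kfun k c) g = \sum_(q <- c) q.2^* * g q.1.
Proof.
move=> [d hd]; apply: (hipc (kapprox_const c) hd).
have [_ hp] := proj1 (kapproxP _ _) hd.
have := @cconv_sum _ c (fun q n => q.2^* * kfun k (d n) q.1)
     (fun q => q.2^* * g q.1) (fun q => cconv_scale _ (hp q.1)).
by apply: cconv_ext => n; rewrite kform_kfun.
Qed.

Lemma hip_kfun_r c g : inH k g -> Hip k g (kfun k c) = \sum_(q <- c) q.2 * (g q.1)^*.
Proof.
move=> [d hd]; apply: (hipc hd (kapprox_const c)).
have [_ hp] := proj1 (kapproxP _ _) hd.
have := cconv_conj (@cconv_sum _ c (fun q n => q.2^* * kfun k (d n) q.1)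
     (fun q => q.2^* * g q.1) (fun q => cconv_scale _ (hp q.1))).
rewrite rmorph_sum.
have -> : \sum_(i <- c) (i.2^* * g i.1)^* = \sum_(q <- c) q.2 * (g q.1)^*.
  by apply: eq_bigr => q _; rewrite rmorphM /= conjCK.
by apply: cconv_ext => n; rewrite (kform_herm c (d n)) kform_kfun.
Qed.

Definition Top (f : V -> C) : V -> C := dfun (xget [::] [set c | f = kfun k c]).

Lemma Top_kfun c : Top (kfun k c) = dfun c.
Proof.
rewrite /Top; set P := [set c' | _].
have Pc : P c by [].
by have /wd -> := xgetPex [::] (ex_intro _ c Pc).
Qed.

Lemma side (a : nat -> L) u w (un : nat -> V -> C) : kapprox k a u -> inl2 w ->
  (forall n, span_k k (un n)) -> nconv (Hip k) un u ->
  nconv l2ip (fun n => Top (un n)) w ->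
  exists cs : nat -> L, (forall y, cconv (fun n => dfun (cs n) y) (w y)) /\
   forall d, 0 < d -> exists N, forall n, (N <= n)%N -> exists M, forall m,
     (M <= m)%N -> qr (scl (-1) (a m) ++ cs n) < d.
Proof.
move=> ha hw hD hH hL.
have /choice [cs hcs] : forall n, exists c, un n = kfun k c.
  by move=> n; case: (hD n) => c ->; exists c.
exists cs; split.
  have hl : forall n, inl2 (fsub (Top (un n)) w).
    by move=> n; rewrite hcs Top_kfun; apply: inl2_sub => //; apply: inl2_dfun.
  move=> y; have := l2coord hl hL y.
  by apply: cconv_ext => n; rewrite hcs Top_kfun.
move=> d d0.
move/cconvE: hH => /(_ (d/2) (divr_gt0 d0 (ltr0Sn _ 1))) [N hN].
exists N => n /hN; rewrite subr0 => hn.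
have hg : kapprox k (fun m => scl (-1) (a m) ++ cs n) (fsub (un n) u).
  by rewrite fsubE hcs; apply: kapprox_lin => //; apply: kapprox_const.
move/cconvE: (hdiag hg) => /(_ (d/2) (divr_gt0 d0 (ltr0Sn _ 1))) [M hM].
exists M => m /hM hm.
rewrite qr_norm.
have := ncBD (B (scl (-1) (a m) ++ cs n) (scl (-1) (a m) ++ cs n)) 0
   (Hip k (fsub (un n) u) (fsub (un n) u)).
rewrite !subr0; lra.
Qed.

Lemma closT : closable (inH k) inl2 (Hip k) l2ip (span_k k) Top.
Proof.
move=> u w1 w2 [hu hw1 [un [hD1 hH1 hL1]]] [_ hw2 [un' [hD2 hH2 hL2]]].
have [a ha] := hu.
have [cs [ca cb]] := side ha hw1 hD1 hH1 hL1.
have [cs' [ca' cb']] := side ha hw2 hD2 hH2 hL2.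
apply/funext => y; apply/eqP; rewrite -subr_eq0; apply/eqP.
apply: nc_small => e e0.
have [K [K0 hK]] := coefb y.
pose t := 4 * (K + 1) / e.
have t0 : 0 < t by rewrite /t divr_gt0 // mulr_gt0 //; lra.
pose d := e / (16 * t).
have d0 : 0 < d by rewrite /d divr_gt0 // mulr_gt0.
have htd : t * d = e / 16.
  by rewrite /d; field; do ?[apply/andP; split]; rewrite ?gt_eqF.
have hKt : K / t <= e / 4.
  rewrite ler_pdivrMr // /t; have -> : e / 4 * (4 * (K + 1) / e) = K + 1.
    by field; rewrite gt_eqF.
  lra.
have [N1 hN1] := cb d d0.
have [N2 hN2] := cb' d d0.
have e4 : 0 < e / 4 by apply: divr_gt0.
have [N3 hN3] := proj1 (cconvE _ _) (ca y) _ e4.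
have [N4 hN4] := proj1 (cconvE _ _) (ca' y) _ e4.
pose n := maxn (maxn N1 N2) (maxn N3 N4).
have hn1 : (N1 <= n)%N by rewrite /n !leq_max leqnn.
have hn2 : (N2 <= n)%N by rewrite /n !leq_max leqnn !orbT.
have hn3 : (N3 <= n)%N by rewrite /n !leq_max leqnn !orbT.
have hn4 : (N4 <= n)%N by rewrite /n !leq_max leqnn !orbT.
have [M1 hM1] := hN1 n hn1.
have [M2 hM2] := hN2 n hn2.
have g1 := hM1 (maxn M1 M2) (leq_maxl _ _).
have g2 := hM2 (maxn M1 M2) (leq_maxr _ _).
set g := scl (-1) (a (maxn M1 M2)) ++ cs n in g1.
set g' := scl (-1) (a (maxn M1 M2)) ++ cs' n in g2.
have hE : qr (cdiff (cs n) (cs' n)) <= 2 * qr g + 2 * qr g'.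
  have -> : qr (cdiff (cs n) (cs' n)) = qr (g ++ negl g').
    by apply: qr_eq; rewrite /g /g' /cdiff !kformE; ring.
  by rewrite -(qr_negl g'); apply: qr_cat.
have hc := hK (cdiff (cs n) (cs' n)) t t0.
have hdf : dfun (cdiff (cs n) (cs' n)) y = dfun (cs n) y - dfun (cs' n) y.
  by rewrite /cdiff dfun_cat dfun_negl.
rewrite hdf in hc.
have ht : t * qr (cdiff (cs n) (cs' n)) <= t * (4 * d).
  by rewrite ler_pM2l //; lra.
have a3 : nc (w1 y - dfun (cs n) y) < e / 4 by rewrite ncB; apply: hN3.
have a4 : nc (dfun (cs' n) y - w2 y) < e / 4 by apply: hN4.
have := ncBD (w1 y) (w2 y) (dfun (cs n) y).
have := ncBD (dfun (cs n) y) (w2 y) (dfun (cs' n) y).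
lra.
Qed.

Lemma closS_side u w (un : nat -> V -> C) : inl2 u -> inH k w ->
  (forall n, span_delta (un n)) -> nconv l2ip un u ->
  nconv (Hip k) (fun n => un n) w -> w = u.
Proof.
move=> hu hw hD hL hH.
have /choice [ds hds] : forall n, exists c, un n = dfun c.
  by move=> n; case: (hD n) => c ->; exists c.
apply/funext => y; apply/eqP; rewrite -subr_eq0; apply/eqP.
apply: nc_small => e e0.
have hl : forall n, inl2 (fsub (un n) u).
  by move=> n; rewrite hds; apply: inl2_sub => //; apply: inl2_dfun.
have ca := l2coord hl hL y.
set K0 := qr [:: (y, 1)].
have K00 : 0 <= K0 by apply: qr_ge0.
pose t := e / (2 * (K0 + 1)).
have t0 : 0 < t by rewrite /t divr_gt0 // mulr_gt0 //; lra.
have htK : t * (K0 + 1) = e / 2.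
  by rewrite /t; field; do ?[apply/andP; split]; rewrite ?gt_eqF //; lra.
have e2 : 0 < e / 2 by apply: divr_gt0.
have [N1 hN1] := proj1 (cconvE _ _) ca _ e2.
have et : 0 < e * t / 2 by apply: divr_gt0 => //; apply: mulr_gt0.
have [N2 hN2] := proj1 (cconvE _ _) hH _ et.
pose n := maxn N1 N2.
have a1 := hN1 n (leq_maxl _ _).
have a2 := hN2 n (leq_maxr _ _); rewrite subr0 in a2.
have hf : inH k (fsub (un n) w) by rewrite hds; apply: inH_fsub => //; apply: inH_dfun.
have p := pointwise y hf t0.
rewrite /fsub in p.
have : nc (Hip k (fsub (un n) w) (fsub (un n) w)) / t < e / 2.
  by rewrite ltr_pdivrMr // mulrAC.
have : t * K0 <= e / 2 by rewrite -htK ler_pM2l //; lra.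
have := ncBD (w y) (u y) (un n y).
have -> : nc (w y - un n y) = nc (un n y - w y) by rewrite ncB.
lra.
Qed.

Lemma closS : closable inl2 (inH k) l2ip (Hip k) span_delta (fun g => g).
Proof.
move=> u w1 w2 [hu hw1 [un [hD1 hL1 hH1]]] [_ hw2 [un' [hD2 hL2 hH2]]].
by rewrite (closS_side hu hw1 hD1 hL1 hH1) (closS_side hu hw2 hD2 hL2 hH2).
Qed.

Lemma kfun_lin a c d :
  (fun y => a * kfun k c y + kfun k d y) = kfun k (scl a c ++ d).
Proof. by apply/funext => y; rewrite kfun_cat kfun_scl. Qed.

Lemma dfun_lin a c d :
  (fun y => a * dfun c y + dfun d y) = dfun (scl a c ++ d).
Proof. by apply/funext => y; rewrite dfun_cat dfun_scl. Qed.

Lemma main_sec :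
  exists T S : (V -> R[i]) -> (V -> R[i]),
    [/\ linear_on (span_k k) T /\ (forall f, span_k k f -> inl2 (T f)),
        linear_on span_delta S /\ (forall g, span_delta g -> inH k (S g)),
        closable (inH k) inl2 (Hip k) l2ip (span_k k) T
          /\ closable inl2 (inH k) l2ip (Hip k) span_delta S,
        sub_adj inl2 (inH k) l2ip (Hip k) span_delta S (span_k k) T
          /\ sub_adj (inH k) inl2 (Hip k) l2ip (span_k k) T span_delta S
      & forall x : V, T (k^~ x) = delta x /\ S (delta x) = delta x].
Proof.
exists Top, (fun g => g); split.
- split.
    move=> a f g [c ->] [d ->]; split; first by exists (scl a c ++ d); rewrite kfun_lin.
    by rewrite kfun_lin !Top_kfun dfun_lin.
  by move=> f [c ->]; rewrite Top_kfun; apply: inl2_dfun.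
- split.
    move=> a f g [c ->] [d ->]; split => //.
    by exists (scl a c ++ d); rewrite dfun_lin.
  by move=> g [c ->]; apply: inH_dfun.
- by split; [apply: closT | apply: closS].
- split.
    move=> y [c ->]; split; first exact: inH_kfun.
      by rewrite Top_kfun; apply: inl2_dfun.
    move=> v [a ->].
    by rewrite Top_kfun hip_kfun_r ?l2_dfun_r //; apply: inH_dfun.
  move=> y [a ->]; split; first exact: inl2_dfun.
    exact: inH_dfun.
  move=> v [c ->].
  by rewrite Top_kfun l2_dfun_l hip_kfun_l //; apply: inH_dfun.
- move=> x; split => //.
  have -> : k^~ x = kfun k [:: (x, 1)].
    by apply/funext => y; rewrite /kfun big_cons big_nil mul1r addr0.
  rewrite Top_kfun; apply/funext => y.
  by rewrite /dfun big_cons big_nil mul1r addr0.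
Qed.

End Dev.

Unset Implicit Arguments.

Theorem corollary2p7 (R : realType) (V : choiceType)
    (hV : ([set: V] #= [set: nat])%card)
    (k : V -> V -> R[i]) (hk : pos_def k)
    (hdelta : forall x : V, inH k (@delta R V x)) :
  exists T S : (V -> R[i]) -> (V -> R[i]),
    [/\ linear_on (span_k k) T /\ (forall f, span_k k f -> inl2 (T f)),
        linear_on (@span_delta R V) S /\ (forall g, span_delta g -> inH k (S g)),
        closable (inH k) (@inl2 R V) (Hip k) (@l2ip R V) (span_k k) T
          /\ closable (@inl2 R V) (inH k) (@l2ip R V) (Hip k) (@span_delta R V) S,
        sub_adj (@inl2 R V) (inH k) (@l2ip R V) (Hip k) (@span_delta R V) S (span_k k) T
          /\ sub_adj (inH k) (@inl2 R V) (Hip k) (@l2ip R V) (span_k k) T (@span_delta R V) S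
      & forall x : V, T (k^~ x) = @delta R V x /\ S (@delta R V x) = @delta R V x].
Proof. exact: (main_sec hk hdelta). Qed.
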